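(* Let $\mathbb{F}$ be a field, let $n\ge 1$, and let $B$ be a nonzero matrix in $M_n(\mathbb{F})$. Then $B$ is strongly independent over $\mathbb{F}$ if and only if the characteristic polynomial $P_B(t)=\det(tI_n-B)$ is irreducible in $\mathbb{F}[t]$.
   Context: An $n$-tuple $(B_1,\dots,B_n)$ of matrices in $M_n(\mathbb{F})$ is called strongly independent over $\mathbb{F}$ if for every nonzero column vector $v\in\mathbb{F}^{n\times 1}$, the vectors $B_1v,\dots,B_nv$ are linearly independent over $\mathbb{F}$. A nonzero matrix $B\in M_n(\mathbb{F})$ is called strongly independent over $\mathbb{F}$ if the $n$-tuple $(I_n,B,B^2,\dots,B^{n-1})$ is strongly independent over $\mathbb{F}$. *)

(* Defs.v *)
From mathcomp Require Import all_boot all_order all_algebra.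
Set Implicit Arguments. Unset Strict Implicit. Unset Printing Implicit Defensive.
Import GRing.Theory.
Local Open Scope ring_scope.

Definition lin_indep (F : fieldType) (m k : nat) (w : 'I_k -> 'cV[F]_m) : Prop :=
  forall c : 'I_k -> F, \sum_(i < k) c i *: w i = 0 -> forall i, c i = 0.

Definition strongly_independent_tuple (F : fieldType) (n : nat)
    (Bs : 'I_n -> 'M[F]_n) : Prop :=
  forall v : 'cV[F]_n, v != 0 -> lin_indep (fun i => Bs i *m v).

Definition strongly_independent_mx (F : fieldType) (n : nat) (B : 'M[F]_n.+1) : Prop :=
  B != 0 /\ strongly_independent_tuple (fun i : 'I_n.+1 => B ^+ i).

(* Main.v *)
Require Import Defs.
From mathcomp Require Import all_boot all_order all_algebra.
Set Implicit Arguments. Unset Strict Implicit. Unset Printing Implicit Defensive.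
From mathcomp Require Import zify.
Import GRing.Theory.
Local Open Scope ring_scope.

Lemma sum_horner (F : fieldType) (n : nat) (B : 'M[F]_n.+1) (c : nat -> F) (v : 'cV[F]_n.+1) :
  \sum_(i < n.+1) c i *: (B ^+ i *m v) = horner_mx B (\poly_(i < n.+1) c i) *m v.
Proof.
rewrite poly_def rmorph_sum /= mulmx_suml; apply: eq_bigr => i _.
by rewrite linearZ /= rmorphXn /= horner_mx_X scalemxAl.
Qed.

Lemma poly_trunc (F : fieldType) (N : nat) (p : {poly F}) :
  (size p <= N)%N -> \poly_(i < N) p`_i = p.
Proof.
move=> hs; apply/polyP => k; rewrite coef_poly; case: ifP => // /negbT.
by rewrite -leqNgt => hk; rewrite nth_default // (leq_trans hs hk).
Qed.

Lemma si_kill (F : fieldType) (n : nat) (B : 'M[F]_n.+1) (v : 'cV[F]_n.+1) (p : {poly F}) :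
  strongly_independent_tuple (fun i : 'I_n.+1 => B ^+ i) -> v != 0 ->
  (size p <= n.+1)%N -> horner_mx B p *m v = 0 -> p = 0.
Proof.
move=> SI v0 hs hp.
have := SI v v0 (fun i => p`_i); rewrite /= sum_horner poly_trunc // => /(_ hp) H.
apply/polyP => k; rewrite coef0; case: (ltnP k n.+1) => hk.
  exact: (H (Ordinal hk)).
by rewrite nth_default // (leq_trans hs hk).
Qed.

Lemma col_mul' (F : fieldType) m n p j (A : 'M[F]_(m, n)) (M : 'M[F]_(n, p)) :
  col j (A *m M) = A *m col j M.
Proof. by apply/colP => i; rewrite !mxE; apply: eq_bigr => k _; rewrite !mxE. Qed.

(* n.+1 encodes n >= 1 *)
Theorem theorem1p5 (F : fieldType) (n : nat) (B : 'M[F]_n.+1) :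
  B != 0 ->
  (strongly_independent_mx B <-> irreducible_poly (char_poly B)).
Proof.
move=> B0; split.
- case=> _ SI; split; first by rewrite size_char_poly.
  move=> q sq1 qd; apply/negPn/negP => nq.
  have chi0 : char_poly B != 0 by rewrite -size_poly_gt0 size_char_poly.
  have q0 : q != 0 by apply/eqP => q0; move: qd chi0; rewrite q0 dvd0p => ->.
  have sqle := dvdp_leq chi0 qd.
  have sqne : size q != size (char_poly B) by rewrite dvdp_size_eqp.
  have sqN : (size q <= n.+1)%N.
    by move: sqle sqne; rewrite size_char_poly leq_eqVlt => /orP [/eqP ->|]; rewrite ?eqxx.
  set r := char_poly B %/ q.
  have hchi : r * q = char_poly B by rewrite divpK.
  have r0 : r != 0 by apply/eqP => r0; move: chi0; rewrite -hchi r0 mul0r eqxx.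
  have sq2 : (1 < size q)%N.
    by move: sq1 q0; rewrite -size_poly_gt0; case: (size q) => [|[]].
  have srN : (size r <= n.+1)%N.
    have := size_mul r0 q0; rewrite hchi size_char_poly => e.
    move: e sq2; case: (size r) => // m; case: (size q) => // k /= e; lia.
  have CH : horner_mx B r * horner_mx B q = 0.
    by rewrite -rmorphM /= hchi Cayley_Hamilton.
  case: (pickP (fun j => col j (horner_mx B r) != 0)) => [j Hj | H0].
  + apply: (negP q0); apply/eqP.
    apply: (si_kill SI Hj sqN).
    rewrite -col_mul' mulmxE.
    have -> : horner_mx B q * horner_mx B r = 0.
      by rewrite -rmorphM /= mulrC hchi Cayley_Hamilton.
    by apply/colP => i; rewrite !mxE.
  + have rB : horner_mx B r = 0.
      apply/matrixP => i j; have := H0 j; move/negbFE/eqP/colP/(_ i).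
      by rewrite !mxE.
    have v0 : (delta_mx 0 0 : 'cV[F]_n.+1) != 0.
      apply/negP => /eqP /matrixP /(_ 0 0); rewrite !mxE /= => /eqP.
      by rewrite oner_eq0.
    apply: (negP r0); apply/eqP; apply: (si_kill SI v0 srN).
    by rewrite rB mul0mx.
- move=> irr; split => // v v0 c hc.
  set p := \poly_(i < n.+1) c (inord i).
  have hp : horner_mx B p *m v = 0.
    rewrite -sum_horner -[RHS]hc; apply: eq_bigr => i _; by rewrite inord_val.
  suff p0 : p = 0.
    move=> i; have := coef_poly n.+1 (fun k => c (inord k)) i.
    by rewrite -/p p0 coef0 ltn_ord inord_val.
  apply/eqP; apply/negPn/negP => p0.
  have cop : coprimep (char_poly B) p.
    rewrite irreducible_poly_coprime //; apply/negP => /(dvdp_leq p0).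
    by rewrite size_char_poly leqNgt ltnS size_poly.
  rewrite coprimep_sym in cop.
  case/Bezout_eq1_coprimepP: cop => [[u w]] /= e.
  have := congr1 (horner_mx B) e; rewrite rmorphD !rmorphM /= Cayley_Hamilton mulr0 addr0 rmorph1.
  move=> e1; apply: (negP v0); apply/eqP.
  have -> : v = (horner_mx B u * horner_mx B p) *m v by rewrite e1 mul1mx.
  by rewrite -mulmxE -mulmxA hp mulmx0.
Qed.
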